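(* Let $B$ be a blueprint with a zero $0$. Then a subset $I\subseteq B$ is an ideal of $B$ if and only if: (1) $ab\in I$ for all $a\in I$, $b\in B$; (2) $0\in I$; and (3) whenever $a+\sum_j b_j\equiv\sum_k c_k$ with $a\in B$ and all $b_j,c_k\in I$, then $a\in I$.
   Context: A monoid is a commutative semigroup $A$, written multiplicatively, with neutral element $1$. For a monoid $A$, $\mathbb N[A]$ denotes the semiring of finite formal sums $\sum a_i$ of elements $a_i\in A$ (repetitions allowed), with empty sum $\underline0$ and multiplication extended bilinearly from $A$. A pre-addition on $A$ is a relation $\mathcal R\subseteq\mathbb N[A]\times\mathbb N[A]$, written $\sum a_i\equiv\sum b_j$, which is an equivalence relation and satisfies: if $\sum a_i\equiv\sum b_j$ and $\sum c_k\equiv\sum d_l$, then $\sum a_i+\sum c_k\equiv\sum b_j+\sum d_l$ and $\sum_{i,k}a_ic_k\equiv\sum_{j,l}b_jd_l$. A blueprint $B=(A,\mathcal R)$ is a monoid $A$ with a pre-addition $\mathcal R$; we write $a\in B$ for $a\in A$. An element $e$ with $e\equiv\underline0$ is a zero of $B$. For an equivalence relation $\sim$ on $A$, its linear extension $\sim_{\mathbb N}$ is the equivalence relation on $\mathbb N[A]$ generated by $\sum_{i=1}^n a_i\sim_{\mathbb N}\sum_{i=1}^n b_i$ whenever $a_i\sim b_i$ for all $i$. For a subset $I\subseteq B$, let $\sim^I$ be the equivalence relation on $A$ with $a\sim^I b$ iff $a=b$ or $a,b\in I$, and let $\sim_I$ be the relation on $A$ with $a\sim_I b$ iff there is a finite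 sequence $a\equiv\sum_k c_{1,k}\sim^I_{\mathbb N}\sum_k d_{1,k}\equiv\sum_k c_{2,k}\sim^I_{\mathbb N}\cdots\sim^I_{\mathbb N}\sum_k d_{n,k}\equiv b$ with $c_{i,k},d_{i,k}\in A$. An ideal of $B$ is a subset $I\subseteq B$ such that (I1) $ab\in I$ for all $a\in I$, $b\in B$; (I2) every zero of $B$ lies in $I$; (I3) if $a\sim_I b$ and $b\in I$, then $a\in I$. *)

(* Defs.v *)
From Stdlib Require Import List Permutation Relations.
Import ListNotations.

(* Elements of N[A] (finite formal sums with repetitions) are represented by
   lists; two lists represent the same element of N[A] iff they are
   permutations of each other. *)

Definition sum_mul {A : Type} (m : A -> A -> A) (s t : list A) : list A :=
  flat_map (fun a => map (fun c => m a c) t) s.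

Record blueprint := Blueprint {
  carrier :> Type;
  bmul : carrier -> carrier -> carrier;
  bone : carrier;
  bmul_assoc : forall a b c, bmul a (bmul b c) = bmul (bmul a b) c;
  bmul_comm : forall a b, bmul a b = bmul b a;
  bmul_1l : forall a, bmul bone a = a;
  bR : list carrier -> list carrier -> Prop;
  (* reflexivity on N[A] (lists equal as multisets are the same formal sum) *)
  bR_refl : forall s t, Permutation s t -> bR s t;
  bR_sym : forall s t, bR s t -> bR t s;
  bR_trans : forall s t u, bR s t -> bR t u -> bR s u;
  bR_add : forall s t u v, bR s t -> bR u v -> bR (s ++ u) (t ++ v);
  bR_mul : forall s t u v, bR s t -> bR u v ->
             bR (sum_mul bmul s u) (sum_mul bmul t v)
}.

Arguments bmul {b0} : rename.
Arguments bR {b0} : rename.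

Definition is_zero (B : blueprint) (e : B) : Prop := bR [e] [].

Section Ideals.
Variable B : blueprint.
Variable I : B -> Prop.

Definition simI (a b : B) : Prop := a = b \/ (I a /\ I b).

(* its linear extension ~^I_N on N[A]: the equivalence relation generated by
   sum a_i ~ sum b_i with a_i ~^I b_i (and by equality in N[A]) *)
Definition linI_step (s t : list B) : Prop :=
  Permutation s t \/ Forall2 simI s t.
Definition linI : list B -> list B -> Prop := clos_refl_sym_trans _ linI_step.

(* chains  s ≡ c_1 ~ d_1 ≡ c_2 ~ ... ~ d_n ≡ v  (n >= 1) *)
Inductive chainI : list B -> list B -> Prop :=
| chainI_one : forall s c d v, bR s c -> linI c d -> bR d v -> chainI s v
| chainI_step : forall s u c d v,
    chainI s u -> bR u c -> linI c d -> bR d v -> chainI s v.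

Definition sim_I (a b : B) : Prop := chainI [a] [b].

Definition is_ideal : Prop :=
  (forall a b : B, I a -> I (bmul a b)) /\
  (forall e : B, is_zero B e -> I e) /\
  (forall a b : B, sim_I a b -> I b -> I a).
End Ideals.

(* Main.v *)
Require Import Defs.
From Stdlib Require Import List Permutation Relations.
Import ListNotations.

Section S.
Variable B : blueprint.
Variable I : B -> Prop.

Lemma bR_perm_l (s s' t : list B) : Permutation s s' -> bR s t -> bR s' t.
Proof. intros P H. eapply bR_trans; [apply bR_sym, bR_refl, P| exact H]. Qed.
Lemma bR_perm_r (s t t' : list B) : Permutation t t' -> bR s t -> bR s t'.
Proof. intros P H. eapply bR_trans; [exact H| apply bR_refl, P]. Qed.

Definition R' (s t : list B) := exists bs cs, Forall I bs /\ Forall I cs /\ bR (s ++ bs) (t ++ cs).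

Lemma perm4 (a b c d : list B) : Permutation ((a ++ b) ++ (c ++ d)) ((a ++ c) ++ (b ++ d)).
Proof.
  rewrite !app_assoc_reverse; apply Permutation_app_head.
  rewrite !app_assoc; apply Permutation_app_tail; apply Permutation_app_comm.
Qed.

Lemma R'_app s1 t1 s2 t2 : R' s1 t1 -> R' s2 t2 -> R' (s1 ++ s2) (t1 ++ t2).
Proof.
  intros [b1 [c1 [Hb1 [Hc1 H1]]]] [b2 [c2 [Hb2 [Hc2 H2]]]].
  exists (b1 ++ b2), (c1 ++ c2). repeat split; try (apply Forall_app; auto).
  pose proof (bR_add _ _ _ _ _ H1 H2) as H.
  eapply bR_perm_l; [apply perm4|]. eapply bR_perm_r; [apply perm4|]. exact H.
Qed.

Lemma R'_bR s t : bR s t -> R' s t.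
Proof. intros H; exists [], []; repeat split; auto. rewrite !app_nil_r; auto. Qed.

Lemma R'_sym s t : R' s t -> R' t s.
Proof. intros [b [c [Hb [Hc H]]]]. exists c, b; repeat split; auto. apply bR_sym; auto. Qed.

Lemma R'_trans s t u : R' s t -> R' t u -> R' s u.
Proof.
  intros [b [c [Hb [Hc H1]]]] [b' [c' [Hb' [Hc' H2]]]].
  exists (b ++ b'), (c' ++ c); repeat split; try (apply Forall_app; auto).
  pose proof (bR_add _ _ _ _ _ H1 (bR_refl _ b' b' (Permutation_refl _))) as H3.
  pose proof (bR_add _ _ _ _ _ H2 (bR_refl _ c c (Permutation_refl _))) as H4.
  rewrite app_assoc. rewrite app_assoc.
  eapply bR_trans; [exact H3|]. eapply bR_perm_l; [|exact H4].
  rewrite !app_assoc_reverse; apply Permutation_app_head, Permutation_app_comm.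
Qed.

Lemma R'_F2 s t : Forall2 (simI B I) s t -> R' s t.
Proof.
  induction 1 as [|x y s t Hxy _ IH].
  - apply R'_bR, bR_refl; auto.
  - change (R' ([x] ++ s) ([y] ++ t)). apply R'_app; auto.
    destruct Hxy as [<- | [Ix Iy]].
    + apply R'_bR, bR_refl; auto.
    + exists [y], [x]; repeat split; auto. apply bR_refl; simpl. apply perm_swap.
Qed.

Lemma R'_linI s t : linI B I s t -> R' s t.
Proof.
  induction 1 as [s t [P|F]| |s t _ IH|s t u _ IH1 _ IH2].
  - apply R'_bR, bR_refl, P.
  - apply R'_F2, F.
  - apply R'_bR, bR_refl; auto.
  - apply R'_sym; auto.
  - eapply R'_trans; eauto.
Qed.

Lemma R'_chain s t : chainI B I s t -> R' s t.
Proof.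
  induction 1.
  - eapply R'_trans; [apply R'_bR; eauto|]. eapply R'_trans; [apply R'_linI; eauto|].
    apply R'_bR; auto.
  - eapply R'_trans; [eauto|]. eapply R'_trans; [apply R'_bR; eauto|].
    eapply R'_trans; [apply R'_linI; eauto|]. apply R'_bR; auto.
Qed.

Lemma rep_zero (z : B) n : is_zero B z -> bR (repeat z n) [].
Proof.
  intros hz; induction n; simpl.
  - apply bR_refl; auto.
  - change (bR ([z] ++ repeat z n) ([] ++ [])). apply bR_add; auto.
Qed.

Lemma F2_rep (z : B) l : I z -> Forall I l -> Forall2 (simI B I) (repeat z (length l)) l.
Proof. intros Iz; induction 1; simpl; constructor; auto. right; auto. Qed.

Lemma F2_rep' (z : B) l : I z -> Forall I l -> Forall2 (simI B I) l (repeat z (length l)).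
Proof. intros Iz; induction 1; simpl; constructor; auto. right; auto. Qed.

End S.

Theorem mainTheorem11 (B : blueprint) (z : B) (hz : is_zero B z)
  (I : B -> Prop) :
  is_ideal B I <->
  ((forall a b : B, I a -> I (bmul a b)) /\
   I z /\
   (forall (a : B) (bs cs : list B),
      bR (a :: bs) cs -> Forall I bs -> Forall I cs -> I a)).
Proof.
  split.
  - intros [H1 [H2 H3]]. assert (Iz : I z) by auto.
    repeat split; auto.
    intros a bs cs H Hb Hc. apply (H3 a z); auto.
    eapply (chainI_step B I [a] (a :: bs) cs (repeat z (length cs)) [z]).
    + eapply (chainI_one B I [a] (a :: repeat z (length bs)) (a :: bs) (a :: bs)).
      * change (bR ([a] ++ []) ([a] ++ repeat z (length bs))).
        apply bR_add; [apply bR_refl; auto| apply bR_sym, rep_zero; auto].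
      * apply rst_step. right. constructor; [left; auto| apply F2_rep; auto].
      * apply bR_refl; auto.
    + exact H.
    + apply rst_step. right. apply F2_rep'; auto.
    + eapply bR_trans; [apply rep_zero; auto| apply bR_sym; exact hz].
  - intros [H1 [H2 H3]]. split; [auto|split].
    + intros e He. apply (H3 e [] []); auto.
    + intros a b Hab Ib. apply R'_chain in Hab.
      destruct Hab as [bs [cs [Hb [Hc H]]]].
      apply (H3 a bs (b :: cs)); auto.
Qed.
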